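(* For each $s=1,2,\dots$, let $B_s$ be the set of indices selected at exploration round $s$ and $\mathbf{q}_s$ the associated probability vector. Then $$\forall i\in[d],\quad\mathbb{P}[i\in B_s]=\frac{d-k}{d-1}q_{s,i}+\frac{k-1}{d-1},$$ $$\forall i\ne j\in[d],\quad\mathbb{P}[i,j\in B_s]=\frac1{g_{d,k}}+\frac{d-k}{(k-2)g_{d,k}}(q_{s,i}+q_{s,j}),$$ $$\forall\text{ pairwise distinct }i,j,r\in[d],\quad\mathbb{P}[i,j,r\in B_s]=\frac1{g_{d,k}}\cdot\frac{k-3}{d-3}+\frac1{g_{d,k}}\cdot\frac{d-k}{d-3}(q_{s,i}+q_{s,j}+q_{s,r}).$$ Moreover, $\mathbb{E}_s[\hat{\mathbf{x}}_{s^2}]=\mathbf{x}_{s^2}$ and $\mathbb{E}_s[\mathbf{h}_{s^2}]=\mathbf{x}_{s^2}\mathbf{x}_{s^2}^\top$, where $\mathbb{E}_s[\cdot]=\mathbb{E}[\cdot\mid B_1,\dots,B_{s-1}]$ is taken with respect to $B_s$.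
   Context: Integers $3\le k\le d-3$, $[d]=\{1,\dots,d\}$, $g_{d,k}=\frac{(d-1)(d-2)}{(k-1)(k-2)}$. SAMPLING$(k,d,\mathbf{w})$ for nonzero $\mathbf{w}\in\mathbb{R}^d$: with $q_i=|w_i|/\|\mathbf{w}\|_1$, draw $I_1\in[d]$ with $\mathbb{P}(I_1=i)=q_i$, then $k-1$ distinct indices uniformly without replacement from $[d]\setminus\{I_1\}$; output the $k$-set $B$. At exploration round $s$ a nonzero vector $\hat{\mathbf{w}}_{s-1}\in\mathbb{R}^d$ determined by $B_1,\dots,B_{s-1}$ is given ($\hat{\mathbf{w}}_0=\frac1d\mathbf{1}_d$), $q_{s,i}=|\hat w_{s-1,i}|/\|\hat{\mathbf{w}}_{s-1}\|_1$ and $B_s=$SAMPLING$(k,d,\hat{\mathbf{w}}_{s-1})$; all probabilities are over $B_s$ conditional on $B_1,\dots,B_{s-1}$. An instance $\mathbf{x}_{s^2}\in\mathbb{R}^d$ (fixed given the past) is observed on $B_s$ and $\hat x_{s^2,i}=\frac{x_{s^2,i}}{\mathbb{P}[i\in B_s]}\mathbb{I}_{i\in B_s}$, $h_{s^2}[i,i]=\frac{x_{s^2,i}^2}{\mathbb{P}[i\in B_s]}\mathbb{I}_{i\in B_s}$, $h_{s^2}[i,j]=\frac{x_{s^2,i}x_{s^2,j}}{\mathbb{P}[i,j\in B_s]}\mathbb{I}_{i,j\in B_s}$ for $i\ne j$. *)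

(* Defs.v *)
From mathcomp Require Import all_boot all_order all_algebra.
Set Implicit Arguments. Unset Strict Implicit. Unset Printing Implicit Defensive.
Import Order.TTheory GRing.Theory Num.Theory.
Local Open Scope ring_scope.

Section Sampling.
Variables (R : realFieldType) (d k : nat).
Implicit Types (w x : 'cV[R]_d) (S : {set 'I_d}).

Definition l1norm w : R := \sum_(j < d) `|w j 0|.
Definition qprob w (i : 'I_d) : R := `|w i 0| / l1norm w.

(* Joint law of (I_1, B) produced by SAMPLING(k,d,w):
   P(I_1 = i) = q_i, then the remaining k-1 indices form a uniformly random
   (k-1)-subset of [d] \ {i} (there are 'C(d-1,k-1) of them); B = {i} u rest. *)
Definition sampling_joint w (i : 'I_d) S : R :=
  qprob w i *
  (if (i \in S) && (#|S| == k) then ('C(d.-1, k.-1)%:R)^-1 else 0).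

Definition sampling_prob w S : R := \sum_(i < d) sampling_joint w i S.

Definition Pr w (E : pred {set 'I_d}) : R :=
  \sum_(S : {set 'I_d} | E S) sampling_prob w S.
Definition Expect (m n : nat) w (F : {set 'I_d} -> 'M[R]_(m, n)) : 'M[R]_(m, n) :=
  \sum_(S : {set 'I_d}) sampling_prob w S *: F S.

Definition incl1 w (i : 'I_d) : R := Pr w [pred S : {set 'I_d} | i \in S].
Definition incl2 w (i j : 'I_d) : R := Pr w [pred S : {set 'I_d} | (i \in S) && (j \in S)].
Definition incl3 w (i j r : 'I_d) : R :=
  Pr w [pred S : {set 'I_d} | [&& i \in S, j \in S & r \in S]].

Definition xhat w x S : 'cV[R]_d :=
  \col_i (if i \in S then x i 0 / incl1 w i else 0).
Definition hmat w x S : 'M[R]_d :=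
  \matrix_(i, j)
    if i == j then (if i \in S then x i 0 ^+ 2 / incl1 w i else 0)
    else (if (i \in S) && (j \in S) then x i 0 * x j 0 / incl2 w i j else 0).

End Sampling.

Definition gdk (R : realFieldType) (d k : nat) : R :=
  ((d - 1) * (d - 2))%:R / ((k - 1) * (k - 2))%:R.

(* Main.v *)
Require Import Defs.
From mathcomp Require Import all_boot all_order all_algebra.
From mathcomp Require Import zify ring lra.
Import Order.TTheory GRing.Theory Num.Theory.
Local Open Scope ring_scope.

Definition cnt (d k a : nat) : nat := if (a <= k)%N then 'C(d - a, k - a) else 0%N.

Lemma count_sup (d k : nat) (A : {set 'I_d}) :
  #|[set S : {set 'I_d} | (A \subset S) && (#|S| == k)]| = cnt d k #|A|.
Proof.
rewrite /cnt; case: leqP => hA.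
- have -> : [set S : {set 'I_d} | (A \subset S) && (#|S| == k)] =
     (fun B => B :|: A) @: [set B : {set 'I_d} | B \subset ~: A & #|B| == (k - #|A|)%N].
    apply/setP => S; rewrite inE; apply/idP/imsetP.
    + case/andP => AS /eqP cS; exists (S :\: A).
        rewrite inE subsetDr /=.
        have := cardsD S A; rewrite (setIidPr AS) cS => ->; by [].
      apply/setP => y; rewrite !inE; case yA: (y \in A); last by rewrite orbF.
      by rewrite (subsetP AS).
    + case=> B; rewrite inE => /andP[BA /eqP cB] ->.
      rewrite subsetUr /= cardsU.
      have -> : B :&: A = set0.
        apply/setP => y; rewrite !inE; apply/negbTE/negP => /andP[yB yA].
        by have := subsetP BA y yB; rewrite inE yA.
      by rewrite cards0 subn0 cB subnK.
  rewrite card_in_imset; last first.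
    move=> B1 B2; rewrite !inE => /andP[B1A _] /andP[B2A _] E.
    apply/setP => y; have : (y \in B1 :|: A) = (y \in B2 :|: A) by rewrite E.
    rewrite !inE.
    case yA: (y \in A); last by rewrite !orbF.
    have := subsetP B1A y; have := subsetP B2A y; rewrite !inE yA.
    case: (y \in B1); case: (y \in B2) => //.
    all: try by move=> h1 h2; have := h1 isT.
    all: try by move=> h1 h2; have := h2 isT.
  have hc := cardsC A; rewrite card_ord in hc.
  by rewrite cards_draws; congr 'C(_, _); lia.
- apply/eqP; rewrite cards_eq0; apply/eqP/setP => S; rewrite !inE.
  apply/negbTE/negP => /andP[AS /eqP cS].
  by have := subset_leq_card AS; rewrite cS leqNgt hA.
Qed.

Lemma Pr_sub (R : realFieldType) d k (w : 'cV[R]_d) (T : {set 'I_d})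
  (E : pred {set 'I_d}) (hE : forall S, E S = (T \subset S)) :
  Pr k w E = \sum_(i < d) qprob w i * ((cnt d k #|i |: T|)%:R / ('C(d - 1,k - 1))%:R).
Proof.
rewrite !subn1.
rewrite /Pr /sampling_prob exchange_big /=; apply: eq_bigr => i _.
rewrite /sampling_joint -mulr_sumr; congr (_ * _).
rewrite -big_mkcondr /= sumr_const -count_sup -[_ *+ _]mulr_natl.
congr (_%:R * _); apply: eq_card => S; rewrite unfold_in hE inE subUset sub1set.
by rewrite andbA [X in X && _]andbC.
Qed.

Lemma sum_split (R : realFieldType) d (F : 'I_d -> R) (G : nat -> R) (T : {set 'I_d}) :
  \sum_(i < d) F i = 1 ->
  \sum_(i < d) F i * G #|i |: T| =
  (\sum_(i in T) F i) * G #|T| + (1 - \sum_(i in T) F i) * G #|T|.+1.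
Proof.
move=> h1.
have hc : 1 - \sum_(i in T) F i = \sum_(i | i \notin T) F i.
  by rewrite -h1 (bigID (mem T)) /= addrC addrK.
rewrite hc (bigID (mem T)) /= !mulr_suml; congr (_ + _); apply: eq_bigr => i hi;
  by rewrite cardsU1 ?hi.
Qed.

Lemma qprob_ge0 (R : realFieldType) d (w : 'cV[R]_d) i : 0 <= qprob w i.
Proof. by rewrite /qprob divr_ge0 // /l1norm sumr_ge0. Qed.

Lemma qprob_sum (R : realFieldType) d (w : 'cV[R]_d) : w != 0 -> \sum_(i < d) qprob w i = 1.
Proof.
move=> hw; rewrite /qprob -mulr_suml divff //.
apply/negP; rewrite /l1norm psumr_eq0 // => /allP h; move/negP: hw; apply.
apply/eqP/matrixP => i j; rewrite ord1 mxE.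
by have := h i (mem_index_enum _); rewrite normr_eq0 => /eqP.
Qed.

Lemma binrel1 d k : (3 <= k)%N -> (k <= d - 3)%N ->
  ((d - 1) * 'C(d - 2, k - 2) = (k - 1) * 'C(d - 1, k - 1))%N.
Proof.
move=> h1 h2; have := mul_bin_diag (d - 1) (k - 2).
have -> : (d - 1).-1 = (d - 2)%N by lia.
by have -> : (k - 2).+1 = (k - 1)%N by lia.
Qed.

Lemma binrel2 d k : (3 <= k)%N -> (k <= d - 3)%N ->
  ((d - 2) * 'C(d - 3, k - 3) = (k - 2) * 'C(d - 2, k - 2))%N.
Proof.
move=> h1 h2; have := mul_bin_diag (d - 2) (k - 3).
have -> : (d - 2).-1 = (d - 3)%N by lia.
by have -> : (k - 3).+1 = (k - 2)%N by lia.
Qed.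

Lemma binrel3 d k : (3 <= k)%N -> (k <= d - 3)%N ->
  ((d - 3) * cnt d k 4 = (k - 3) * 'C(d - 3, k - 3))%N.
Proof.
move=> h1 h2; rewrite /cnt; case: (leqP 4 k) => h4.
  have := mul_bin_diag (d - 3) (k - 4).
  have -> : (d - 3).-1 = (d - 4)%N by lia.
  by have -> : (k - 4).+1 = (k - 3)%N by lia.
have -> : (k - 3 = 0)%N by lia.
by rewrite muln0 mul0n.
Qed.

Theorem lemma9 (R : realFieldType) (d k : nat)
  (hk3 : (3 <= k)%N) (hkd : (k <= d - 3)%N)
  (w x : 'cV[R]_d) (hw : w != 0) :
  let q := qprob w in
  let g := gdk R d k in
  [/\ (forall i : 'I_d,
        incl1 k w i = (d - k)%:R / (d - 1)%:R * q i + (k - 1)%:R / (d - 1)%:R),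
      (forall i j : 'I_d, i != j ->
        incl2 k w i j = 1 / g + (d - k)%:R / ((k - 2)%:R * g) * (q i + q j)),
      (forall i j r : 'I_d, i != j -> i != r -> j != r ->
        incl3 k w i j r = 1 / g * ((k - 3)%:R / (d - 3)%:R)
                          + 1 / g * ((d - k)%:R / (d - 3)%:R) * (q i + q j + q r)),
      Expect k w (xhat k w x) = x
    & Expect k w (hmat k w x) = x *m x^T].
Proof.
move=> q g.
have hq1 : \sum_(i < d) q i = 1 by exact: qprob_sum.
have hq0 : forall i, 0 <= q i by move=> i; exact: qprob_ge0.
have c1 : cnt d k 1 = 'C(d - 1, k - 1) by rewrite /cnt ifT //; lia.
have c2 : cnt d k 2 = 'C(d - 2, k - 2) by rewrite /cnt ifT //; lia.
have c3 : cnt d k 3 = 'C(d - 3, k - 3) by rewrite /cnt ifT //; lia.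
have r1 := congr1 (fun n => n%:R : R) (binrel1 d k hk3 hkd).
have r2 := congr1 (fun n => n%:R : R) (binrel2 d k hk3 hkd).
have r3 := congr1 (fun n => n%:R : R) (binrel3 d k hk3 hkd).
rewrite /= !natrM in r1 r2 r3.
set C1 := ('C(d - 1, k - 1))%:R : R in r1 *.
set C2 := ('C(d - 2, k - 2))%:R : R in r1 r2 *.
set C3 := ('C(d - 3, k - 3))%:R : R in r2 r3 *.
set C4 := (cnt d k 4)%:R : R in r3 *.
have hC1 : C1 != 0 by rewrite pnatr_eq0 -lt0n bin_gt0; lia.
have hd1 : (d - 1)%:R = d%:R - 1 :> R by rewrite natrB //; lia.
have hd2 : (d - 2)%:R = d%:R - 2 :> R by rewrite natrB //; lia.
have hd3 : (d - 3)%:R = d%:R - 3 :> R by rewrite natrB //; lia.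
have hdk : (d - k)%:R = d%:R - k%:R :> R by rewrite natrB //; lia.
have hk1 : (k - 1)%:R = k%:R - 1 :> R by rewrite natrB //; lia.
have hk2 : (k - 2)%:R = k%:R - 2 :> R by rewrite natrB //; lia.
have hk3' : (k - 3)%:R = k%:R - 3 :> R by rewrite natrB //; lia.
have nd1 : d%:R - 1 != 0 :> R by rewrite -hd1 pnatr_eq0; lia.
have nd2 : d%:R - 2 != 0 :> R by rewrite -hd2 pnatr_eq0; lia.
have nd3 : d%:R - 3 != 0 :> R by rewrite -hd3 pnatr_eq0; lia.
have nk1 : k%:R - 1 != 0 :> R by rewrite -hk1 pnatr_eq0; lia.
have nk2 : k%:R - 2 != 0 :> R by rewrite -hk2 pnatr_eq0; lia.
rewrite hd1 hk1 in r1; rewrite hd2 hk2 in r2; rewrite hd3 hk3' in r3.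
have e2 : C2 = (k%:R - 1) / (d%:R - 1) * C1.
  by apply: (mulfI nd1); rewrite r1; field.
have e3 : C3 = (k%:R - 2) / (d%:R - 2) * C2.
  by apply: (mulfI nd2); rewrite r2; field.
have e4 : C4 = (k%:R - 3) / (d%:R - 3) * C3.
  by apply: (mulfI nd3); rewrite r3; field.
have hg : g = (d%:R - 1) * (d%:R - 2) / ((k%:R - 1) * (k%:R - 2)).
  by rewrite /g /gdk !natrM hd1 hd2 hk1 hk2.
have I1 : forall i, incl1 k w i = (d - k)%:R / (d - 1)%:R * q i + (k - 1)%:R / (d - 1)%:R.
  move=> i; rewrite /incl1 (@Pr_sub _ _ _ _ [set i]); last by move=> S; rewrite sub1set.
  rewrite (@sum_split _ _ q (fun a => (cnt d k a)%:R / C1)) // big_set1 cards1 c1 c2.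
  rewrite -/C1 -/C2 hd1 hdk hk1 e2; field; by rewrite ?(nd1, nd2, nd3, nk1, nk2, hC1).
have I2 : forall i j : 'I_d, i != j ->
    incl2 k w i j = 1 / g + (d - k)%:R / ((k - 2)%:R * g) * (q i + q j).
  move=> i j hij; rewrite /incl2 (@Pr_sub _ _ _ _ (i |: [set j])); last first.
    by move=> S; rewrite subUset !sub1set.
  have nij : i \notin [set j] by rewrite inE.
  have cT : #|i |: [set j]| = 2%N by rewrite cardsU1 nij cards1.
  rewrite (@sum_split _ _ q (fun a => (cnt d k a)%:R / C1)) // big_setU1 //= big_set1 cT c2 c3.
  rewrite -/C1 -/C2 -/C3 e3 e2 hg hdk hk2; field; by rewrite ?(nd1, nd2, nd3, nk1, nk2, hC1).
have I3 : forall i j r : 'I_d, i != j -> i != r -> j != r ->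
    incl3 k w i j r = 1 / g * ((k - 3)%:R / (d - 3)%:R)
                          + 1 / g * ((d - k)%:R / (d - 3)%:R) * (q i + q j + q r).
  move=> i j r hij hir hjr.
  rewrite /incl3 (@Pr_sub _ _ _ _ (i |: (j |: [set r]))); last first.
    by move=> S; rewrite !subUset !sub1set.
  have njr : j \notin [set r] by rewrite inE.
  have nijr : i \notin j |: [set r] by rewrite !inE negb_or hij hir.
  have cT : #|i |: (j |: [set r])| = 3%N by rewrite !cardsU1 nijr njr cards1.
  rewrite (@sum_split _ _ q (fun a => (cnt d k a)%:R / C1)) // big_setU1 //= big_setU1 //= big_set1 cT c3.
  rewrite -/C1 -/C3 -/C4 e4 e3 e2 hg hdk hk3' hd3; field; by rewrite ?(nd1, nd2, nd3, nk1, nk2, hC1).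
have gpos : 0 < g.
  rewrite /g /gdk divr_gt0 // ltr0n muln_gt0; apply/andP; split; lia.
have P1 : forall i, incl1 k w i != 0.
  move=> i; rewrite I1 gt_eqF //; apply: ltr_wpDl.
    by apply: mulr_ge0 => //; apply: divr_ge0; rewrite ler0n.
  by apply: divr_gt0; rewrite ltr0n; lia.
have P2 : forall i j, i != j -> incl2 k w i j != 0.
  move=> i j hij; rewrite I2 // gt_eqF //; apply: ltr_pwDl.
    by rewrite div1r invr_gt0.
  apply: mulr_ge0; last by apply: addr_ge0.
  by apply: divr_ge0; rewrite ?ler0n // mulr_ge0 ?ler0n // ltW.
split => //.
- apply/matrixP => i j; rewrite ord1 /Expect summxE.
  rewrite (eq_bigr (fun S : {set 'I_d} => (if i \in S then sampling_prob k w S else 0) * (x i 0 / incl1 k w i))); last first.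
    by move=> S _; rewrite !mxE; case: ifP => _; rewrite ?mulr0 ?mul0r.
  rewrite -mulr_suml -big_mkcond /=.
  have -> : \sum_(S : {set 'I_d} | i \in S) sampling_prob k w S = incl1 k w i by [].
  by rewrite mulrCA divff ?mulr1.
- apply/matrixP => i j; rewrite /Expect summxE !mxE big_ord1 !mxE.
  case: (eqVneq i j) => [<-|hij].
    rewrite (eq_bigr (fun S : {set 'I_d} => (if i \in S then sampling_prob k w S else 0) * (x i 0 ^+ 2 / incl1 k w i))); last first.
      by move=> S _; rewrite !mxE eqxx; case: ifP => _; rewrite ?mulr0 ?mul0r.
    rewrite -mulr_suml -big_mkcond /=.
    have -> : \sum_(S : {set 'I_d} | i \in S) sampling_prob k w S = incl1 k w i by [].
    by rewrite mulrCA divff ?mulr1 // expr2.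
  rewrite (eq_bigr (fun S : {set 'I_d} => (if (i \in S) && (j \in S) then sampling_prob k w S else 0) * (x i 0 * x j 0 / incl2 k w i j))); last first.
    by move=> S _; rewrite !mxE (negbTE hij); case: ifP => _; rewrite ?mulr0 ?mul0r.
  rewrite -mulr_suml -big_mkcond /=.
  have -> : \sum_(S : {set 'I_d} | (i \in S) && (j \in S)) sampling_prob k w S = incl2 k w i j by [].
  by rewrite mulrCA divff ?mulr1 // P2.
Qed.
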